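(* Let $\mu$ be a Radon measure on $\mathbb{R}^n$ and $\delta\in\Upsilon(\mathbb{R}^n,\mu)$. If $\bar\delta x_j=0$ ($\mu$-a.e.) for each $j=1,\dots,n$, then $\delta=0$.
   Context: For a metric space $X$ with Borel measure $\mu$, $\mathrm{Lip}_b(X)$ is the space of bounded Lipschitz functions with norm $\max(\sup|f|,L(f))$; a derivation is a linear map $\delta:\mathrm{Lip}_b(X)\to L^\infty(X,\mu)$ with $\delta(fg)=f\delta g+g\delta f$ and such that whenever a net $(f_\alpha)$ with $\sup\|f_\alpha\|_{\mathrm{Lip}}<\infty$ converges pointwise to $f$, $\delta f_\alpha\to\delta f$ weak-* in $L^\infty(X,\mu)$; $\Upsilon(X,\mu)$ is the set of derivations. For a Lipschitz (possibly unbounded) $f$ on $\mathbb{R}^n$, $\bar\delta f$ is the function with $\chi_B\bar\delta f=\chi_B\,\delta(\tilde f_B)$ for every ball $B$, where $\tilde f_B$ is any bounded Lipschitz function agreeing with $f$ on $B$ (independent of the choice by locality). $x_j$ is the $j$-th coordinate function. *)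

(* Defs.v *)
From HB Require Import structures.
From mathcomp Require Import all_boot all_order all_algebra.
From mathcomp Require Import all_classical all_reals all_analysis.
Set Implicit Arguments. Unset Strict Implicit. Unset Printing Implicit Defensive.
Import Order.TTheory GRing.Theory Num.Theory.
Import numFieldNormedType.Exports.
Local Open Scope classical_set_scope.
Local Open Scope ring_scope.

Definition Rn (R : realType) (n : nat) := 'rV[R]_n.

(* R^n equipped with its Borel sigma-algebra (generated by the open sets
   of the usual (product = Euclidean) topology). *)
Notation borelRn R n :=
  (g_sigma_algebraType (@open ('rV[R]_n))).

Definition toB (R : realType) (n : nat) (h : 'rV[R]_n -> R) : borelRn R n -> R := h.
Definition setB (R : realType) (n : nat) (A : set 'rV[R]_n) : set (borelRn R n) := A.

Definition edist (R : realType) (n : nat) (x y : 'rV[R]_n) : R :=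
  Num.sqrt (\sum_(i < n) (x ord0 i - y ord0 i) ^+ 2).

Definition eball (R : realType) (n : nat) (x : 'rV[R]_n) (r : R) : set 'rV[R]_n :=
  [set y | edist x y < r].

Definition coordfun (R : realType) (n : nat) (j : 'I_n) : 'rV[R]_n -> R :=
  fun x => x ord0 j.

Definition lipschitz_with (R : realType) (n : nat) (L : R) (f : 'rV[R]_n -> R) :=
  forall x y, `|f x - f y| <= L * edist x y.

Definition Lipb (R : realType) (n : nat) (f : 'rV[R]_n -> R) :=
  (exists C : R, forall x, `|f x| <= C) /\ (exists L : R, lipschitz_with L f).

(* ||f||_Lip = max(sup |f|, L(f)) <= C *)
Definition Lipnorm_le (R : realType) (n : nat) (C : R) (f : 'rV[R]_n -> R) :=
  (forall x, `|f x| <= C) /\ lipschitz_with C f.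

Definition radon (R : realType) (n : nat)
    (mu : {measure set (borelRn R n) -> \bar R}) :=
  [/\ (forall (x : 'rV[R]_n) (r : R), 0 < r -> (mu (setB (eball x r)) < +oo)%E),
      (forall A : set (borelRn R n), measurable A ->
         mu A = ereal_inf [set mu (setB U) | U in [set U : set 'rV[R]_n |
                                                 open U /\ (A : set 'rV[R]_n) `<=` U]])
    & (forall U : set 'rV[R]_n, open U ->
         mu (setB U) = ereal_sup [set mu (setB K) | K in [set K : set 'rV[R]_n |
                                                 compact K /\ K `<=` U]])].

Definition Linf (R : realType) (n : nat)
    (mu : {measure set (borelRn R n) -> \bar R}) (h : 'rV[R]_n -> R) :=
  measurable_fun setT (toB h) /\
  exists M : R, {ae mu, forall x : borelRn R n, `|toB h x| <= M}.

Definition L1 (R : realType) (n : nat)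
    (mu : {measure set (borelRn R n) -> \bar R}) (g : 'rV[R]_n -> R) :=
  mu.-integrable setT (fun x : borelRn R n => (toB g x)%:E).

Definition aeeq (R : realType) (n : nat)
    (mu : {measure set (borelRn R n) -> \bar R}) (h1 h2 : 'rV[R]_n -> R) :=
  {ae mu, forall x : borelRn R n, toB h1 x = toB h2 x}.

Definition directed (I : Type) (le : I -> I -> Prop) :=
  [/\ inhabited I, (forall a, le a a), (forall a b c, le a b -> le b c -> le a c)
    & (forall a b, exists c, le a c /\ le b c)].

Definition net_cvg (R : realType) (I : Type) (le : I -> I -> Prop) (u : I -> R) (l : R) :=
  forall e : R, 0 < e -> exists a0, forall a, le a0 a -> `|u a - l| < e.

Definition weakstar_cvg (R : realType) (n : nat)
    (mu : {measure set (borelRn R n) -> \bar R})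
    (I : Type) (le : I -> I -> Prop) (h : I -> 'rV[R]_n -> R) (l : 'rV[R]_n -> R) :=
  forall g, L1 mu g ->
    net_cvg le (fun a => Rintegral mu setT (fun x : borelRn R n => toB (h a) x * toB g x))
               (Rintegral mu setT (fun x : borelRn R n => toB l x * toB g x)).

(* delta is a derivation in Upsilon(R^n, mu); delta is only constrained on
   Lip_b(R^n), and its values are considered modulo mu-a.e. equality. *)
Definition derivation (R : realType) (n : nat)
    (mu : {measure set (borelRn R n) -> \bar R})
    (delta : ('rV[R]_n -> R) -> ('rV[R]_n -> R)) :=
  [/\ (forall f, Lipb f -> Linf mu (delta f)),
      (forall f g (a b : R), Lipb f -> Lipb g ->
         aeeq mu (delta (fun x => a * f x + b * g x))
                 (fun x => a * delta f x + b * delta g x)),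
      (forall f g, Lipb f -> Lipb g ->
         aeeq mu (delta (fun x => f x * g x))
                 (fun x => f x * delta g x + g x * delta f x))
    & (forall (I : Type) (le : I -> I -> Prop) (fa : I -> 'rV[R]_n -> R) (f : 'rV[R]_n -> R),
         directed le ->
         (forall a, Lipb (fa a)) -> Lipb f ->
         (exists C : R, forall a, Lipnorm_le C (fa a)) ->
         (forall x, net_cvg le (fun a => fa a x) (f x)) ->
         weakstar_cvg mu le (fun a => delta (fa a)) (delta f))].

Definition is_bar_delta (R : realType) (n : nat)
    (mu : {measure set (borelRn R n) -> \bar R})
    (delta : ('rV[R]_n -> R) -> ('rV[R]_n -> R)) (f h : 'rV[R]_n -> R) :=
  forall (x : 'rV[R]_n) (r : R), 0 < r ->
  forall g, Lipb g -> (forall y, eball x r y -> g y = f y) ->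
    {ae mu, forall y : borelRn R n, setB (eball x r) y -> toB h y = toB (delta g) y}.

(* Main.v *)
Require Import Defs.
From HB Require Import structures.
From mathcomp Require Import all_boot all_order all_algebra.
From mathcomp Require Import all_classical all_reals all_analysis.
From mathcomp Require Import ring lra.
From mathcomp Require Import measurable_realfun.
Import Order.TTheory GRing.Theory Num.Theory.
Import numFieldNormedType.Exports.
Local Open Scope classical_set_scope.
Local Open Scope ring_scope.

Set Implicit Arguments. Unset Strict Implicit.
Local Notation edist := Defs.edist.
Section Basic.
Variables (R : realType) (n : nat).
Implicit Types (x y : 'rV[R]_n) (f g u : 'rV[R]_n -> R).

Lemma edist_ge0 x y : 0 <= edist x y.
Proof. exact: sqrtr_ge0. Qed.

Lemma coord_le_edist x y (i : 'I_n) : `|x ord0 i - y ord0 i| <= edist x y.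
Proof.
rewrite /edist -sqrtr_sqr ler_sqrt; last by apply: sumr_ge0 => j _; exact: sqr_ge0.
rewrite (bigD1 i) //= lerDl; apply: sumr_ge0 => j _; exact: sqr_ge0.
Qed.

Lemma sum_sqr_le (I : Type) (r : seq I) (a : I -> R) :
  \sum_(i <- r) a i ^+ 2 <= (\sum_(i <- r) `|a i|) ^+ 2.
Proof.
elim: r => [|i r IH]; first by rewrite !big_nil expr0n.
rewrite !big_cons.
have S0 : 0 <= \sum_(j <- r) `|a j| by apply: sumr_ge0 => j _.
have := normr_ge0 (a i).
rewrite -(real_normK (num_real (a i))).
nra.
Qed.

Lemma edist_le_l1 x y : edist x y <= \sum_(i < n) `|x ord0 i - y ord0 i|.
Proof.
rewrite /edist.
have S0 : 0 <= \sum_(i < n) `|x ord0 i - y ord0 i| by apply: sumr_ge0.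
rewrite -(ger0_norm S0) -sqrtr_sqr ler_sqrt; first exact: sum_sqr_le.
exact: sqr_ge0.
Qed.

Lemma lip_mono (L C : R) f : lipschitz_with L f -> L <= C -> lipschitz_with C f.
Proof.
move=> Hf LC x y; apply: (le_trans (Hf x y)); apply: ler_wpM2r => //.
exact: edist_ge0.
Qed.

Definition clamp (r t : R) := Num.max (- r) (Num.min r t).

Lemma min_lip (r a b : R) : `|Num.min r a - Num.min r b| <= `|a - b|.
Proof.
rewrite !minr_absE.
have := ler_dist_dist (r - a) (r - b).
have -> : r - a - (r - b) = - (a - b) by ring.
rewrite normrN => H.
rewrite -mulrBl normrM (@ger0_norm _ 2^-1) ?invr_ge0 ?ler0n //.
have -> : r + a - `|r - a| - (r + b - `|r - b|) = (a - b) - (`|r - a| - `|r - b|) by ring.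
have := ler_normB (a - b) (`|r - a| - `|r - b|).
have := normr_ge0 (a - b).
rewrite ler_pdivrMr ?ltr0n //; lra.
Qed.

Lemma max_lip (r a b : R) : `|Num.max r a - Num.max r b| <= `|a - b|.
Proof.
rewrite !maxr_absE.
have := ler_dist_dist (r - a) (r - b).
have -> : r - a - (r - b) = - (a - b) by ring.
rewrite normrN => H.
rewrite -mulrBl normrM (@ger0_norm _ 2^-1) ?invr_ge0 ?ler0n //.
have -> : r + a + `|r - a| - (r + b + `|r - b|) = (a - b) + (`|r - a| - `|r - b|) by ring.
have := ler_normD (a - b) (`|r - a| - `|r - b|).
have := normr_ge0 (a - b).
rewrite ler_pdivrMr ?ltr0n // ?normr_id; lra.
Qed.

Lemma clamp_lip (r a b : R) : `|clamp r a - clamp r b| <= `|a - b|.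
Proof. rewrite /clamp; apply: le_trans (max_lip _ _ _) _; exact: min_lip. Qed.

Lemma Lipb_const (c : R) : Lipb (fun _ : 'rV[R]_n => c).
Proof.
split; first by exists `|c|.
by exists 0 => x y; rewrite subrr normr0 mul0r.
Qed.

Lemma Lipb_lin (a b : R) f g : Lipb f -> Lipb g -> Lipb (fun x => a * f x + b * g x).
Proof.
move=> [[Cf Hf] [Lf Hlf]] [[Cg Hg] [Lg Hlg]]; split.
  exists (`|a| * Cf + `|b| * Cg) => x.
  apply: (le_trans (ler_normD _ _)); rewrite !normrM.
  by apply: lerD; apply: ler_wpM2l.
exists (`|a| * Lf + `|b| * Lg) => x y.
have -> : a * f x + b * g x - (a * f y + b * g y) = a * (f x - f y) + b * (g x - g y) by ring.
apply: (le_trans (ler_normD _ _)); rewrite !normrM mulrDl -!mulrA.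
by apply: lerD; apply: ler_wpM2l.
Qed.

Lemma Lipb_mul f g : Lipb f -> Lipb g -> Lipb (fun x => f x * g x).
Proof.
move=> [[Cf Hf] [Lf Hlf]] [[Cg Hg] [Lg Hlg]]; split.
  exists (Cf * Cg) => x; rewrite normrM; apply: ler_pM => //.
exists (Cf * Lg + Cg * Lf) => x y.
have -> : f x * g x - f y * g y = f x * (g x - g y) + g y * (f x - f y) by ring.
apply: (le_trans (ler_normD _ _)); rewrite !normrM mulrDl -!mulrA.
apply: lerD; apply: ler_pM => //.
Qed.

Lemma Lipb_comp (phi : R -> R) (K : R) u :
  (forall s t, `|phi s - phi t| <= K * `|s - t|) -> Lipb u -> Lipb (fun x => phi (u x)).
Proof.
move=> Hphi [[Cu Hu] [Lu Hlu]].
have K0 : 0 <= K.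
  have := Hphi 1 0; rewrite subr0 normr1 mulr1; apply: le_trans; exact: normr_ge0.
split.
  exists (`|phi 0| + K * Cu) => x.
  have := Hphi (u x) 0; rewrite subr0 => H.
  have : `|phi (u x)| <= `|phi 0| + `|phi (u x) - phi 0|.
    have E : phi (u x) = phi 0 + (phi (u x) - phi 0) by ring.
    by rewrite {1}E; exact: ler_normD.
  move=> H2; apply: (le_trans H2); apply: lerD => //.
  apply: (le_trans H); exact: ler_wpM2l.
exists (K * Lu) => x y.
apply: (le_trans (Hphi _ _)); rewrite -mulrA; apply: ler_wpM2l => //.
Qed.

Lemma clamp_bound (r t : R) : 0 <= r -> `|clamp r t| <= r.
Proof.
move=> r0; rewrite /clamp ler_norml; apply/andP; split.
  by rewrite le_max lexx.
rewrite ge_max; apply/andP; split; first lra.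
by rewrite ge_min lexx.
Qed.

Lemma clamp_id (r t : R) : `|t| <= r -> clamp r t = t.
Proof.
rewrite ler_norml => /andP[h1 h2]; rewrite /clamp.
have -> : Num.min r t = t by rewrite min_r.
by rewrite max_r.
Qed.

Lemma Lipb_clamp (r : R) (j : 'I_n) : 0 <= r -> Lipb (fun x : 'rV[R]_n => clamp r (x ord0 j)).
Proof.
move=> r0; split; first by exists r => x; exact: clamp_bound.
exists 1 => x y; rewrite mul1r; apply: le_trans (clamp_lip _ _ _) _.
exact: coord_le_edist.
Qed.

End Basic.

Section Deriv.
Variables (R : realType) (n : nat).
Variable mu : {measure set (borelRn R n) -> \bar R}.
Variable delta : ('rV[R]_n -> R) -> ('rV[R]_n -> R).
Hypothesis Hd : derivation mu delta.

Definition Zs (B : set 'rV[R]_n) (u : 'rV[R]_n -> R) :=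
  Lipb u /\ {ae mu, forall y : borelRn R n, B y -> delta u y = 0}.

Lemma delta_lin (a b : R) f g : Lipb f -> Lipb g ->
  {ae mu, forall y : borelRn R n, delta (fun x => a * f x + b * g x) y = a * delta f y + b * delta g y}.
Proof. by case: Hd => _ H _ _ Hf Hg; exact: H. Qed.

Lemma delta_mul f g : Lipb f -> Lipb g ->
  {ae mu, forall y : borelRn R n, delta (fun x => f x * g x) y = f y * delta g y + g y * delta f y}.
Proof. by case: Hd => _ _ H _ Hf Hg; exact: H. Qed.

Lemma delta_one : {ae mu, forall y : borelRn R n, delta (fun _ => 1) y = 0}.
Proof.
have := delta_mul (@Lipb_const R n 1) (@Lipb_const R n 1).
rewrite (_ : (fun x : 'rV[R]_n => 1 * 1) = fun _ => 1); last by apply: funext => x; rewrite mulr1.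
apply: filterS => y; rewrite !mul1r => H.
have : delta (fun _ => 1) y + delta (fun _ => 1) y - delta (fun _ => 1) y = 0 by rewrite -H subrr.
by rewrite addrK.
Qed.

Lemma delta_const (c : R) : {ae mu, forall y : borelRn R n, delta (fun _ => c) y = 0}.
Proof.
have := delta_lin c 0 (@Lipb_const R n 1) (@Lipb_const R n 1).
rewrite (_ : (fun x : 'rV[R]_n => c * 1 + 0 * 1) = fun _ => c); last first.
  by apply: funext => x; rewrite mulr1 mul0r addr0.
apply: filterS2 delta_one => y H1 ->; by rewrite H1 mulr0 mul0r addr0.
Qed.

Lemma Zs_const B (c : R) : Zs B (fun _ => c).
Proof.
split; first exact: Lipb_const.
by apply: filterS (delta_const c) => y ->.
Qed.

Lemma Zs_lin B (a b : R) f g : Zs B f -> Zs B g -> Zs B (fun x => a * f x + b * g x).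
Proof.
move=> [Lf Zf] [Lg Zg]; split; first exact: Lipb_lin.
apply: filterS3 (delta_lin a b Lf Lg) Zf Zg => y -> H1 H2 By.
by rewrite H1 // H2 // !mulr0 addr0.
Qed.

Lemma Zs_mul B f g : Zs B f -> Zs B g -> Zs B (fun x => f x * g x).
Proof.
move=> [Lf Zf] [Lg Zg]; split; first exact: Lipb_mul.
apply: filterS3 (delta_mul Lf Lg) Zf Zg => y -> H1 H2 By.
by rewrite H1 // H2 // !mulr0 addr0.
Qed.

Lemma Zs_ext B f g : (forall x, f x = g x) -> Zs B f -> Zs B g.
Proof. by move=> E; rewrite (_ : f = g) //; apply: funext. Qed.

Lemma Zs_sub B B' u : B' `<=` B -> Zs B u -> Zs B' u.
Proof. by move=> sub [Lu Zu]; split => //; apply: filterS Zu => y H /sub /H. Qed.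

Lemma Zs_sqrt B u (e : R) : 0 < e -> Zs B u ->
  Zs B (fun x => Num.sqrt (u x ^+ 2 + e ^+ 2)).
Proof.
move=> e0 Zu.
set v := fun x => Num.sqrt (u x ^+ 2 + e ^+ 2).
have vpos x : 0 < v x.
  have e2 : 0 < e ^+ 2 by rewrite exprn_gt0.
  rewrite /v sqrtr_gt0; have := sqr_ge0 (u x); lra.
have Lv : Lipb v.
  apply: (@Lipb_comp R n (fun t => Num.sqrt (t ^+ 2 + e ^+ 2)) 1) => //; last by case: Zu.
  move=> s t; rewrite mul1r.
  set p := Num.sqrt (s ^+ 2 + e ^+ 2); set q := Num.sqrt (t ^+ 2 + e ^+ 2).
  have hp : p ^+ 2 = s ^+ 2 + e ^+ 2 by rewrite sqr_sqrtr // addr_ge0 // sqr_ge0.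
  have hq : q ^+ 2 = t ^+ 2 + e ^+ 2 by rewrite sqr_sqrtr // addr_ge0 // sqr_ge0.
  have e2 : 0 < e ^+ 2 by rewrite exprn_gt0.
  have p0 : 0 < p by rewrite sqrtr_gt0; have := sqr_ge0 s; lra.
  have q0 : 0 < q by rewrite sqrtr_gt0; have := sqr_ge0 t; lra.
  have ps : `|s| <= p by rewrite -sqrtr_sqr ler_sqrt ?addr_ge0 ?sqr_ge0 // lerDl sqr_ge0.
  have qt : `|t| <= q by rewrite -sqrtr_sqr ler_sqrt ?addr_ge0 ?sqr_ge0 // lerDl sqr_ge0.
  have E : (p - q) * (p + q) = (s - t) * (s + t).
    have -> : (p - q) * (p + q) = p ^+ 2 - q ^+ 2 by ring.
    rewrite hp hq; ring.
  have : `|p - q| * (p + q) = `|s - t| * `|s + t|.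
    by rewrite -(ger0_norm (ltW (addr_gt0 p0 q0))) -!normrM E.
  have st : `|s + t| <= p + q by apply: le_trans (ler_normD _ _) _; exact: lerD.
  move=> E2.
  have : `|p - q| * (p + q) <= `|s - t| * (p + q).
    rewrite E2; apply: ler_wpM2l => //.
  by rewrite ler_pM2r // addr_gt0.
have Zuu : Zs B (fun x => 1 * (u x * u x) + e ^+ 2 * 1) by apply: Zs_lin; [exact: Zs_mul | exact: Zs_const].
have Zvv : Zs B (fun x => v x * v x).
  apply: Zs_ext Zuu => x; rewrite mul1r mulr1 -expr2 /v -expr2 sqr_sqrtr //.
  by rewrite addr_ge0 // sqr_ge0.
split => //.
case: Zvv => _ H.
apply: filterS2 H (delta_mul Lv Lv) => y H1 H2 By.
move: (H1 By); rewrite H2 => /eqP; rewrite -mulr2n -mulr_natr mulf_eq0 pnatr_eq0 /= orbF mulf_eq0.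
by rewrite gt_eqF //= => /eqP.
Qed.

End Deriv.

Section MeasL.
Context d (T : measurableType d) (R : realType).
Variable mu : {measure set T -> \bar R}.

Lemma Rint_ae0 (phi : T -> R) : measurable_fun setT phi ->
  {ae mu, forall x, phi x = 0} -> Rintegral mu setT phi = 0.
Proof.
move=> mphi H; rewrite /Rintegral (ae_eq_integral (cst 0%E)) //= ?integral0 //.
- exact/measurable_realfun.measurable_EFinP.
- by apply: filterS H => x /= -> _.
Qed.

Lemma indic_L1 (A : set T) : measurable A -> (mu A < +oo)%E ->
  mu.-integrable setT (fun x => (\1_A x)%:E).
Proof.
move=> mA finA; apply/integrableP; split.
  exact/measurable_realfun.measurable_EFinP/measurable_realfun.measurable_indic.
rewrite (eq_integral (fun x => (\1_A x)%:E)); last first.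
  by move=> t _; rewrite gee0_abs // lee_fin.
by rewrite integral_indic // setIT.
Qed.

Lemma pos_zero (k : T -> R) (B : set T) : measurable B -> (mu B < +oo)%E ->
  measurable_fun setT k ->
  (forall A, measurable A -> A `<=` B -> Rintegral mu setT (fun x => k x * \1_A x) = 0) ->
  {ae mu, forall y, B y -> k y <= 0}.
Proof.
move=> mB finB mk H.
pose A (m : nat) := B `&` (setT `&` k @^-1` `]0, m%:R]%classic).
have mA m : measurable (A m) by apply: measurableI => //; apply: mk => //; exact: measurable_itv.
have AB m : A m `<=` B by move=> y [].
have step m : {ae mu, forall y, A m y -> False}.
  pose F : T -> \bar R := fun x => (k x * \1_(A m) x)%:E.
  have F0 x : (0 <= F x)%E.
    rewrite /F lee_fin /indic; case: (boolP (x \in A m)) => [/set_mem [_ [_ /=]]|_].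
      by rewrite in_itv /= => /andP[/ltW h _]; rewrite mulr1.
    by rewrite mulr0.
  have mF : measurable_fun setT F.
    apply: measurableT_comp => //.
    apply: measurable_realfun.measurable_funM => //.
  have Hle : (\int[mu]_x F x <= m%:R%:E * mu (A m))%E.
    have E : mu (A m) = (\int[mu]_x (\1_(A m) x)%:E)%E by rewrite integral_indic // setIT.
    rewrite E.
    rewrite -ge0_integralZl_EFin //.
    apply: ge0_le_integral => //.
    - by apply: measurable_funeM; apply/measurable_EFinP/measurable_indic.
    move=> x _; rewrite /F /indic; case: (boolP (x \in A m)) => [/set_mem [_ [_ /=]]|_].
      by rewrite in_itv /= => /andP[_ h]; rewrite -EFinM !mulr1 lee_fin.
    by rewrite -EFinM !mulr0.
    by apply/measurable_EFinP/measurable_indic.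
  have fin : (\int[mu]_x F x \is a fin_num)%E.
    rewrite ge0_fin_numE; last exact: integral_ge0.
    apply: le_lt_trans Hle _.
    rewrite lte_mul_pinfty // ?lee_fin //.
    apply: le_lt_trans finB; apply: le_measure => //; rewrite inE //.
  have I0 : (\int[mu]_x F x = 0)%E.
    by rewrite -(fineK fin); have := H _ (mA m) (AB m); rewrite /Rintegral => ->.
  have : ae_eq mu setT F (cst 0%E).
    apply/ae_eq_integral_abs => //.
    by rewrite -I0; apply: eq_integral => x _; rewrite gee0_abs.
  apply: filterS => y /(_ I) Fy Ay.
  move: Fy; rewrite /F /indic mem_set // mulr1 => -[] /eqP.
  move: Ay => [_ [_ /=]]; rewrite in_itv /= => /andP[h _].
  by rewrite gt_eqF.
have := ae_foralln step.
apply: filterS => y Hy By; rewrite leNgt; apply/negP => ky.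
apply: (Hy (Num.Def.archi_bound (k y))).
split => //; split => //=; rewrite in_itv /= ky /=.
exact/ltW/archi_boundP/ltW.
Qed.

End MeasL.

Section Closed.
Variables (R : realType) (n : nat).
Variable mu : {measure set (borelRn R n) -> \bar R}.
Variable delta : ('rV[R]_n -> R) -> ('rV[R]_n -> R).
Hypothesis Hd : derivation mu delta.

Lemma net_const0 (I : Type) (le : I -> I -> Prop) (u : I -> R) (l : R) :
  directed le -> (forall a, u a = 0) -> net_cvg le u l -> l = 0.
Proof.
move=> [_ refl _ _] u0 H.
apply/eqP/negPn/negP => l0.
have [a0 Ha] : exists a0, forall a, le a0 a -> `|u a - l| < `|l| by apply: H; rewrite normr_gt0.
by move: (Ha a0 (refl a0)); rewrite u0 sub0r normrN ltxx.
Qed.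

Lemma Zs_closed (B : set 'rV[R]_n) : measurable (setB B) -> (mu (setB B) < +oo)%E ->
  forall (I : Type) (le : I -> I -> Prop) (fa : I -> 'rV[R]_n -> R) (f : 'rV[R]_n -> R),
  directed le -> (forall a, Zs mu delta B (fa a)) -> Lipb f ->
  (exists C, forall a, Lipnorm_le C (fa a)) ->
  (forall x, net_cvg le (fun a => fa a x) (f x)) -> Zs mu delta B f.
Proof.
move=> mB finB I le fa f dir Z Lf HC Hx.
case: Hd => Hinf _ _ Hcont.
have W := Hcont I le fa f dir (fun a => (Z a).1) Lf HC Hx.
have mdf : measurable_fun setT (toB (delta f)) by case: (Hinf f Lf).
have key (g : 'rV[R]_n -> R) : L1 mu g -> (forall x, ~ B x -> g x = 0) ->
    measurable_fun setT (toB g) ->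
    Rintegral mu setT (fun x : borelRn R n => toB (delta f) x * toB g x) = 0.
  move=> Lg g0 mg.
  apply: (net_const0 dir _ (W g Lg)) => a.
  apply: Rint_ae0.
    apply: measurable_funM => //.
    by case: (Hinf (fa a) (Z a).1).
  apply: filterS (Z a).2 => y H.
  have [By|nBy] := pselect (B y); first by rewrite /toB H // mul0r.
  by rewrite /toB g0 // mulr0.
have finA (A : set (borelRn R n)) : measurable A -> A `<=` setB B -> (mu A < +oo)%E.
  move=> mA AB; apply: le_lt_trans finB; apply: le_measure => //; rewrite inE //.
have P1 := pos_zero mB finB mdf.
have P2 : {ae mu, forall y : borelRn R n, setB B y -> (fun x => - toB (delta f) x) y <= 0}.
  apply: pos_zero mB finB _ _; first exact: measurableT_comp.
  move=> A mA AB.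
  have E : (fun x : borelRn R n => - toB (delta f) x * \1_A x) =
           (fun x => toB (delta f) x * toB (fun x => - \1_A x) x).
    by apply: funext => x; rewrite /toB mulNr mulrN.
  rewrite E; apply: key.
  - rewrite /L1 (_ : (fun x => _) = (-%E \o (fun x => (\1_A x)%:E))).
      exact/integrableN/indic_L1/finA.
    by apply: funext => x; rewrite /toB /= EFinN.
  - by move=> x nBx; rewrite /indic memNset ?oppr0 // => /AB.
  - exact/measurableT_comp/measurable_indic.
have P1' : {ae mu, forall y : borelRn R n, setB B y -> toB (delta f) y <= 0}.
  apply: P1 => A mA AB.
  have E : (fun x : borelRn R n => toB (delta f) x * \1_A x) =
           (fun x => toB (delta f) x * toB (\1_A) x) by [].
  rewrite E; apply: key.
  - exact: indic_L1 (finA _ mA AB).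
  - by move=> x nBx; rewrite /indic memNset // => /AB.
  - exact: measurable_indic.
split => //.
apply: filterS2 P1' P2 => y H1 H2 By.
have := H1 By; have := H2 By; rewrite /toB /=; lra.
Qed.

End Closed.

Section Abs.
Variables (R : realType) (n : nat).
Variable mu : {measure set (borelRn R n) -> \bar R}.
Variable delta : ('rV[R]_n -> R) -> ('rV[R]_n -> R).
Hypothesis Hd : derivation mu delta.

Lemma sqrt_lip (e s t : R) : 0 < e ->
  `|Num.sqrt (s ^+ 2 + e ^+ 2) - Num.sqrt (t ^+ 2 + e ^+ 2)| <= `|s - t|.
Proof.
move=> e0.
set p := Num.sqrt (s ^+ 2 + e ^+ 2); set q := Num.sqrt (t ^+ 2 + e ^+ 2).
have hp : p ^+ 2 = s ^+ 2 + e ^+ 2 by rewrite sqr_sqrtr // addr_ge0 // sqr_ge0.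
have hq : q ^+ 2 = t ^+ 2 + e ^+ 2 by rewrite sqr_sqrtr // addr_ge0 // sqr_ge0.
have e2 : 0 < e ^+ 2 by rewrite exprn_gt0.
have p0 : 0 < p by rewrite sqrtr_gt0; have := sqr_ge0 s; lra.
have q0 : 0 < q by rewrite sqrtr_gt0; have := sqr_ge0 t; lra.
have ps : `|s| <= p by rewrite -sqrtr_sqr ler_sqrt ?addr_ge0 ?sqr_ge0 // lerDl sqr_ge0.
have qt : `|t| <= q by rewrite -sqrtr_sqr ler_sqrt ?addr_ge0 ?sqr_ge0 // lerDl sqr_ge0.
have E : (p - q) * (p + q) = (s - t) * (s + t).
  have -> : (p - q) * (p + q) = p ^+ 2 - q ^+ 2 by ring.
  rewrite hp hq; ring.
have E2 : `|p - q| * (p + q) = `|s - t| * `|s + t|.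
  by rewrite -(ger0_norm (ltW (addr_gt0 p0 q0))) -!normrM E.
have st : `|s + t| <= p + q by apply: le_trans (ler_normD _ _) _; exact: lerD.
have : `|p - q| * (p + q) <= `|s - t| * (p + q) by rewrite E2; apply: ler_wpM2l.
by rewrite ler_pM2r // addr_gt0.
Qed.

Lemma sqrt_approx (e s : R) : 0 <= e ->
  `|Num.sqrt (s ^+ 2 + e ^+ 2) - `|s| | <= e.
Proof.
move=> e0.
have h1 : `|s| <= Num.sqrt (s ^+ 2 + e ^+ 2).
  by rewrite -sqrtr_sqr ler_sqrt ?addr_ge0 ?sqr_ge0 // lerDl sqr_ge0.
have h2 : Num.sqrt (s ^+ 2 + e ^+ 2) <= `|s| + e.
  rewrite -(ger0_norm (addr_ge0 (normr_ge0 s) e0)) -sqrtr_sqr ler_sqrt ?sqr_ge0 //.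
  rewrite -(real_normK (num_real s)); have := normr_ge0 s; nra.
rewrite ger0_norm; lra.
Qed.

Lemma directed_nat : directed (fun a b : nat => (a <= b)%N).
Proof.
split.
- by constructor; exact: 0%N.
- by [].
- move=> a b c h1 h2; exact: (leq_trans h1 h2).
- by move=> a b; exists (maxn a b); rewrite leq_maxl leq_maxr.
Qed.

Lemma Zs_abs (B : set 'rV[R]_n) : measurable (setB B) -> (mu (setB B) < +oo)%E ->
  forall u, Zs mu delta B u -> Zs mu delta B (fun x => `|u x|).
Proof.
move=> mB finB u Zu.
have [[Cu HCu] [Lu HLu]] := Zu.1.
pose fa (k : nat) := fun x => Num.sqrt (u x ^+ 2 + (k.+1%:R^-1) ^+ 2).
have ep k : 0 < k.+1%:R^-1 :> R by rewrite invr_gt0 ltr0n.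
have e1 k : k.+1%:R^-1 <= 1 :> R by rewrite invf_le1 ?ltr0n // ler1n.
apply: (Zs_closed Hd mB finB directed_nat (fa := fa)).
- by move=> k; apply: Zs_sqrt => //.
- by apply: (@Lipb_comp R n (fun t : R => `|t|) 1) => [s t|]; [rewrite mul1r; exact: ler_dist_dist|case: Zu].
- exists (`|Cu| + 1 + `|Lu|) => k; split.
    move=> x; rewrite /fa ger0_norm ?sqrtr_ge0 //.
    have := sqrt_approx (u x) (ltW (ep k)); rewrite ler_norml => /andP[_ h].
    rewrite lerBlDl in h; apply: (le_trans h).
    have := HCu x; have := e1 k; have := ler_norm Cu; have := normr_ge0 Lu.
    move: (`|u x|) (k.+1%:R^-1) => a b; lra.
  move=> x y; apply: le_trans (sqrt_lip _ _ (ep k)) _.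
  apply: le_trans (HLu x y) _; apply: ler_wpM2r; first exact: edist_ge0.
  have := ler_norm Lu; have := normr_ge0 Cu; lra.
- move=> x e e0.
  exists (Num.Def.archi_bound e^-1) => k hk.
  apply: le_lt_trans (sqrt_approx _ (ltW (ep k))) _.
  rewrite invf_plt ?posrE ?ltr0n //.
  have ei : 0 < e^-1 by rewrite invr_gt0.
  have hb := archi_boundP (ltW ei).
  apply: lt_le_trans hb _.
  by rewrite ler_nat; exact: leqW.
Qed.

Lemma Zs_min (B : set 'rV[R]_n) : measurable (setB B) -> (mu (setB B) < +oo)%E ->
  forall u v, Zs mu delta B u -> Zs mu delta B v -> Zs mu delta B (fun x => Num.min (u x) (v x)).
Proof.
move=> mB finB u v Zu Zv.
have Z1 := Zs_lin Hd 1 (-1) Zu Zv.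
have Z2 := Zs_abs mB finB Z1.
have Z3 := Zs_lin Hd 1 1 Zu Zv.
have Z4 := Zs_lin Hd (2^-1) (- 2^-1) Z3 Z2.
apply: Zs_ext Z4 => x; rewrite minr_absE !mul1r mulN1r; ring.
Qed.

End Abs.

Section Geo.
Variables (R : realType) (n : nat).

Lemma sum_cont (r : seq 'I_n) (F : 'I_n -> 'rV[R]_n -> R) :
  (forall i, continuous (F i)) -> continuous (fun z => \sum_(i <- r) F i z).
Proof.
move=> HF; elim: r => [|i r IH].
  rewrite (_ : (fun z => _) = fun _ => 0); first exact: cst_continuous.
  by apply: funext => z; rewrite big_nil.
rewrite (_ : (fun z => _) = (F i + (fun z => \sum_(j <- r) F j z))); last first.
  by apply: funext => z; rewrite big_cons.
move=> z; apply: continuousD; [exact: HF | exact: IH].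
Qed.

Lemma edist_cont (x : 'rV[R]_n) : continuous (fun z => edist x z).
Proof.
move=> p; rewrite /edist.
have h1 : continuous (fun w : 'rV[R]_n => \sum_(i < n) (x ord0 i - w ord0 i) ^+ 2).
  apply: sum_cont => i w.
rewrite (_ : (fun z => _) = (fun z : 'rV[R]_n => (x ord0 i - z ord0 i)) \* (fun z => (x ord0 i - z ord0 i))); last first.
  by apply: funext => v; rewrite expr2.
apply: continuousM; apply: continuousB; [exact: cst_continuous | exact: coord_continuous
  | exact: cst_continuous | exact: coord_continuous].
exact: (continuous_comp (h1 p) (@sqrt_continuous R _)).
Qed.

Lemma eball_open (x : 'rV[R]_n) (r : R) : open (eball x r).
Proof.
rewrite (_ : eball x r = (fun z => edist x z) @^-1` [set t | t < r]) //.
apply: open_comp; last exact: open_lt.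
by move=> z _; exact: edist_cont.
Qed.

Lemma eball_meas (x : 'rV[R]_n) (r : R) : measurable (setB (eball x r) : set (borelRn R n)).
Proof. by apply: sub_sigma_algebra; exact: eball_open. Qed.

End Geo.

Section Final.
Variables (R : realType) (n : nat).
Variable mu : {measure set (borelRn R n) -> \bar R}.
Variable delta : ('rV[R]_n -> R) -> ('rV[R]_n -> R).
Hypothesis Hd : derivation mu delta.
Hypothesis Hrad : radon mu.
Hypothesis Hj : forall j : 'I_n, exists h : 'rV[R]_n -> R,
      is_bar_delta mu delta (coordfun j) h /\ aeeq mu h (fun _ => 0).

Lemma Zs_coord (r rho : R) (j : 'I_n) : 0 < r -> r <= rho ->
  Zs mu delta (eball 0 r) (fun x => clamp rho (x ord0 j)).
Proof.
move=> r0 rrho.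
have rho0 : 0 < rho by apply: lt_le_trans rrho.
have Lg := Lipb_clamp j (ltW rho0).
split => //.
have [h [Hb Hh0]] := Hj j.
have H := Hb 0 rho rho0 _ Lg.
have : {ae mu, forall y : borelRn R n, setB (eball 0 rho) y -> toB h y = toB (delta (fun x => clamp rho (x ord0 j))) y}.
  apply: H => y Hy; rewrite /coordfun; apply: clamp_id.
  have := coord_le_edist 0 y j; rewrite mxE sub0r normrN => h1.
  by apply: le_trans h1 _; apply: ltW.
apply: filterS2 Hh0 => y h1 h2 By.
rewrite /toB in h1 h2 *; rewrite -h2 ?h1 //.
rewrite /setB /eball /=; apply: lt_le_trans rrho; exact: By.
Qed.

Lemma Zs_sum (B : set 'rV[R]_n) (r : seq 'I_n) (F : 'I_n -> 'rV[R]_n -> R) :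
  (forall i, Zs mu delta B (F i)) -> Zs mu delta B (fun x => \sum_(i <- r) F i x).
Proof.
move=> HF; elim: r => [|i r IH].
  by apply: Zs_ext (Zs_const Hd B 0) => x; rewrite big_nil.
apply: Zs_ext (Zs_lin Hd 1 1 (HF i) IH) => x.
by rewrite big_cons !mul1r.
Qed.

Lemma min_le (a b c d t : R) : `|a - c| <= t -> `|b - d| <= t ->
  `|Num.min a b - Num.min c d| <= t.
Proof.
rewrite !ler_norml => /andP[h1 h2] /andP[h3 h4].
case: (leP a b) => h5; case: (leP c d) => h6; apply/andP; split; lra.
Qed.


Lemma Zs_f (k : nat) (f : 'rV[R]_n -> R) : Lipb f -> Zs mu delta (eball 0 k.+1%:R) f.
Proof.
move=> Lf.
set r : R := k.+1%:R.
have r0 : 0 < r by rewrite ltr0n.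
have mB := eball_meas (0 : 'rV[R]_n) r.
have finB : (mu (setB (eball 0 r)) < +oo)%E by case: Hrad => H _ _; exact: H.
have [[M HM] [L HL]] := Lf.
set M' := `|M|; set L' := `|L|.
have L'0 : 0 <= L' by exact: normr_ge0.
have HL' : lipschitz_with L' f := lip_mono HL (ler_norm L).
have HM' x : `|f x| <= M' by apply: le_trans (HM x) (ler_norm M).
pose cone (rho : R) (y : 'rV[R]_n) (x : 'rV[R]_n) :=
  f y + L' * \sum_(i < n) `|clamp rho (x ord0 i) - y ord0 i|.
pose mc (rho : R) (s : seq 'rV[R]_n) :=
  foldr (fun y g => fun x => Num.min (cone rho y x) (g x)) (fun _ => M') s.
pose fa (a : seq 'rV[R]_n * nat) := mc (r + a.2%:R) a.1.
pose le (a b : seq 'rV[R]_n * nat) := {subset a.1 <= b.1} /\ (a.2 <= b.2)%N.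
have cone_lip rho y : lipschitz_with (L' * n%:R) (cone rho y).
  move=> x x'; rewrite /cone.
  rewrite opprD addrACA subrr add0r -mulrBr normrM (ger0_norm L'0) -mulrA.
  apply: ler_wpM2l => //.
  rewrite -sumrB; apply: le_trans (ler_norm_sum _ _ _) _.
  apply: le_trans (_ : _ <= \sum_(i < n) edist x x') _; last first.
    by rewrite sumr_const card_ord mulr_natl.
  apply: ler_sum => i _.
  apply: le_trans (ler_dist_dist _ _) _.
  rewrite opprD addrACA subrr addr0.
  apply: le_trans (clamp_lip _ _ _) _; exact: coord_le_edist.
have cone_low rho y x : - M' <= cone rho y x.
  rewrite /cone; have := HM' y; rewrite ler_norml => /andP[h _].
  apply: le_trans h _; rewrite lerDl; apply: mulr_ge0 => //; exact: sumr_ge0.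
have mc_bound rho s x : `|mc rho s x| <= M'.
  rewrite ler_norml; apply/andP; split.
    elim: s => [|y s IH] /=; first by rewrite lerNl; have := normr_ge0 M; rewrite /M'; lra.
    by rewrite le_min cone_low IH.
  elim: s => [|y s IH] /=; first exact: lexx.
  by rewrite ge_min IH orbT.
have mc_lip rho s : lipschitz_with (L' * n%:R) (mc rho s).
  elim: s => [|y s IH] x x' /=.
    rewrite subrr normr0; apply: mulr_ge0; [exact: mulr_ge0 | exact: edist_ge0].
  by apply: min_le; [exact: cone_lip | exact: IH].
have mc_ge rho s (x : 'rV[R]_n) : (forall i, `|x ord0 i| <= rho) -> f x <= mc rho s x.
  move=> hx; elim: s => [|y s IH] /=; first by apply: le_trans (ler_norm _) (HM' x).
  rewrite le_min IH andbT /cone.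
  have -> : \sum_(i < n) `|clamp rho (x ord0 i) - y ord0 i| = \sum_(i < n) `|x ord0 i - y ord0 i|.
    by apply: eq_bigr => i _; rewrite clamp_id.
  have := HL' x y; have := edist_le_l1 x y; rewrite ler_norml => h1 /andP[_ h2].
  have := ler_wpM2l L'0 h1; lra.
have mc_le rho s (x : 'rV[R]_n) : (forall i, `|x ord0 i| <= rho) -> x \in s -> mc rho s x <= f x.
  move=> hx; elim: s => [//|y s IH] /=; rewrite in_cons => /orP[/eqP <-|xs].
    rewrite ge_min; apply/orP; left; rewrite /cone.
    rewrite big1 ?mulr0 ?addr0 // => i _; rewrite clamp_id // subrr normr0 //.
  by rewrite ge_min IH ?orbT.
apply: (Zs_closed Hd mB finB (le := le) (fa := fa)).
- split.
  + by constructor; exact: ([::], 0%N).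
  + by move=> a; split.
  + move=> a b c [h1 h2] [h3 h4]; split; first by move=> x /h1 /h3.
    exact: leq_trans h2 h4.
  + move=> a b; exists (a.1 ++ b.1, maxn a.2 b.2); split; split => /=.
    * by move=> x xa; rewrite mem_cat xa.
    * exact: leq_maxl.
    * by move=> x xb; rewrite mem_cat xb orbT.
    * exact: leq_maxr.
- move=> [s m]; rewrite /fa /=.
  set rho := r + m%:R.
  have rrho : r <= rho by rewrite /rho lerDl ler0n.
  elim: s => [|y s IH] /=; first exact: Zs_const.
  apply: Zs_min => //.
  have Zt i : Zs mu delta (eball 0 r) (fun x => `|clamp rho (x ord0 i) - y ord0 i|).
    apply: Zs_abs mB finB _ _ => //.
    apply: Zs_ext (Zs_lin Hd 1 (-1) (Zs_coord i r0 rrho) (Zs_const Hd _ (y ord0 i))) => x.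
    by rewrite mul1r mulN1r.
  apply: Zs_ext (Zs_lin Hd 1 L' (Zs_const Hd _ (f y)) (Zs_sum (index_enum _) Zt)) => x.
  by rewrite mul1r /cone.
- exact: Lf.
- exists (M' + L' * n%:R) => a; split.
    move=> x; apply: le_trans (mc_bound _ _ x) _; rewrite lerDl.
    by apply: mulr_ge0.
  apply: lip_mono (mc_lip _ _) _; rewrite lerDr; exact: normr_ge0.
- move=> x e e0.
  have S0 : 0 <= \sum_(i < n) `|x ord0 i| by apply: sumr_ge0.
  exists ([:: x], Num.Def.archi_bound (\sum_(i < n) `|x ord0 i|)) => -[s m] [/= h1 h2].
  have hx : forall i, `|x ord0 i| <= r + m%:R.
    move=> i; apply: le_trans (_ : _ <= \sum_(i < n) `|x ord0 i|) _.
      rewrite (bigD1 i) //= lerDl; exact: sumr_ge0.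
    apply: le_trans (ltW (archi_boundP S0)) _.
    apply: le_trans (_ : _ <= (m%:R : R)) _; first by rewrite ler_nat.
    by rewrite lerDr ltW.
  have xs : x \in s by apply: h1; rewrite mem_seq1.
  rewrite /fa /=.
  have -> : mc (r + m%:R) s x = f x.
    by apply/eqP; rewrite eq_le mc_le // mc_ge.
  by rewrite subrr normr0.
Qed.

End Final.

Unset Implicit Arguments.
Theorem corollary2p21 (R : realType) (n : nat)
    (mu : {measure set (borelRn R n) -> \bar R})
    (delta : ('rV[R]_n -> R) -> ('rV[R]_n -> R)) :
  radon mu ->
  derivation mu delta ->
  (forall j : 'I_n, exists h : 'rV[R]_n -> R,
      is_bar_delta mu delta (coordfun j) h /\ aeeq mu h (fun _ => 0)) ->
  forall f : 'rV[R]_n -> R, Lipb f -> aeeq mu (delta f) (fun _ => 0).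
Proof.
move=> Hrad Hd Hj f Lf.
have Z k := (Zs_f Hd Hrad Hj k Lf).2.
have := @ae_foralln _ _ _ mu
  (fun k (y : borelRn R n) => setB (eball 0 k.+1%:R) y -> delta f y = 0) Z.
apply: filterS => y H; rewrite /toB.
apply: (H (Num.Def.archi_bound (edist 0 y))).
rewrite /setB /eball /=.
apply: lt_le_trans (archi_boundP (edist_ge0 _ _)) _.
by rewrite ler_nat.
Qed.
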